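(* Let $\vec X^m\in\underline V^h_{\partial_0}$ satisfy assumption $(\mathfrak A)$, assume $\vec\omega^m(q_j)\neq\vec0$ for all nodes $q_j\in\overline I\setminus\partial_0I$, and let $\Delta t_m>0$. Then there exists a unique pair $(\delta\vec X^{m+1},\vec\kappa^{m+1})\in\underline V^h_\partial\times\underline V^h$ such that, with $\vec X^{m+1}=\vec X^m+\delta\vec X^{m+1}$, $$\Big(\tfrac{\vec X^{m+1}-\vec X^m}{\Delta t_m},\vec\chi\,|\vec X^m_\rho|\Big)^h=\Big(\vec\kappa^{m+1}-\vec{\mathfrak K}^m(\vec\kappa^{m+1}),\vec\chi\,|\vec X^m_\rho|\Big)^h\quad\forall\,\vec\chi\in\underline V^h,$$ $$\Big(\vec\kappa^{m+1},\vec\eta\,|\vec X^m_\rho|\Big)^h+\Big(\vec X^{m+1}_\rho,\vec\eta_\rho|\vec X^m_\rho|^{-1}\Big)=-\sum_{i=1}^2\sum_{p\in\partial_iI}\widehat\varrho^{(p)}\,\vec\eta(p)\cdot\vec e_{3-i}\quad\forall\,\vec\eta\in\underline V^h_\partial .$$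
   Context: Setup. $\vec e_1=(1,0)^T$, $\vec e_2=(0,1)^T$; ''$\cdot$'' is the Euclidean inner product. $I$ is either the periodic interval $\mathbb R/\mathbb Z$ (with $\partial I=\emptyset$) or $I=(0,1)$ (with $\partial I=\{0,1\}$). $\partial I=\partial_DI\cup\partial_0I\cup\partial_1I\cup\partial_2I$ is a given disjoint partition, and $\widehat\varrho^{(p)}\in\mathbb R$, $p\in\{0,1\}$, are given constants with $|\widehat\varrho^{(p)}|\le1$. Let $J\ge3$, $h=1/J$, $q_j=jh$ ($j=0,\dots,J$; $q_0=q_J$ identified in the periodic case). $V^h$ is the space of continuous functions on $\overline I$ (periodic if $I=\mathbb R/\mathbb Z$) that are affine on each $[q_{j-1},q_j]$; $\underline V^h=[V^h]^2$; $\underline V^h_{\partial_0}=\{\vec\eta\in\underline V^h:\vec\eta(\rho)\cdot\vec e_1=0\ \forall\rho\in\partial_0I\}$; $\underline V^h_\partial=\{\vec\eta\in\underline V^h_{\partial_0}:\vec\eta(\rho)\cdot\vec e_i=0\ \forall\rho\in\partial_iI,\ i=1,2;\ \vec\eta(\rho)=\vec0\ \forall\rho\in\partial_DI\}$. $(\cdot,\cdot)$ is the $L^2(I)$ inner product (with dot product for vector functions), and for piecewise continuous $f,g$ the mass-lumped product is $(f,g)^h=\tfrac h2\sum_{j=1}^J[(fg)(q_j^-)+(fg)(q_{j-1}^+)]$. For $\vec X^m\in\underline V^h_{\partial_0}$ with $|\vec X^m_\rho|>0$ a.e., set $\vec\nu^m=-[\vec X^m_\rho]^\perp/|\vec X^m_\rho|$,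 where $(a,b)^\perp=(b,-a)$, and let $\vec\omega^m\in\underline V^h$ be defined by $(\vec\omega^m,\vec\varphi|\vec X^m_\rho|)^h=(\vec\nu^m,\vec\varphi|\vec X^m_\rho|)$ for all $\vec\varphi\in\underline V^h$. Assumption $(\mathfrak A)$: $|\vec X^m_\rho|>0$ a.e. on $I$ and $\vec X^m(\rho)\cdot\vec e_1>0$ for all $\rho\in\overline I\setminus\partial_0I$. For $\vec\kappa\in\underline V^h$, $\vec{\mathfrak K}^m(\vec\kappa)\in\underline V^h$ is defined nodally by $\vec{\mathfrak K}^m(\vec\kappa)(q_j)=\frac{\vec\omega^m(q_j)\cdot\vec e_1}{\vec X^m(q_j)\cdot\vec e_1}\,\frac{\vec\omega^m(q_j)}{|\vec\omega^m(q_j)|^2}$ if $q_j\in\overline I\setminus\partial_0I$ and $\vec{\mathfrak K}^m(\vec\kappa)(q_j)=-\vec\kappa(q_j)$ if $q_j\in\partial_0I$. *)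

(* Defs.v *)
From Stdlib Require Import Reals Lra Lia.
Open Scope R_scope.

Definition R2 : Type := (R * R)%type.
Definition vadd (u v : R2) : R2 := (fst u + fst v, snd u + snd v).
Definition vsub (u v : R2) : R2 := (fst u - fst v, snd u - snd v).
Definition vscal (a : R) (u : R2) : R2 := (a * fst u, a * snd u).
Definition vopp (u : R2) : R2 := (- fst u, - snd u).
Definition vdot (u v : R2) : R := fst u * fst v + snd u * snd v.
Definition vnorm (u : R2) : R := sqrt (vdot u u).
Definition vperp (u : R2) : R2 := (snd u, - fst u).
Definition vzero : R2 := (0, 0).

Fixpoint sumR (n : nat) (F : nat -> R) : R :=
  match n with O => 0 | S k => sumR k F + F (S k) end.

(** Mesh: J elements, h = 1/J, nodes q_j = j h, j = 0..J.
    A function of V^h (resp. underline V^h) is represented by its nodal values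
    f : nat -> R2, f j = value at q_j (only j <= J matters); in the periodic
    case q_J = q_0 is identified, i.e. f J = f 0. Element j (1 <= j <= J) is
    [q_{j-1}, q_j]. *)
Definition hmesh (J : nat) : R := / INR J.

(** Boundary types: partition of dI into d_D I, d_0 I, d_1 I, d_2 I. *)
Inductive bctype := BD | B0 | B1 | B2.
Definition bc_eqb (a b : bctype) : bool :=
  match a, b with
  | BD, BD | B0, B0 | B1, B1 | B2, B2 => true
  | _, _ => false
  end.

(** per = true : I = R/Z (dI empty); per = false : I = (0,1), with the
    endpoint 0 (node 0) of type bcL and the endpoint 1 (node J) of type bcR.
    in_bd J per bcL bcR k j  <=>  node q_j lies in d_k I. *)
Definition in_bd (J : nat) (per : bool) (bcL bcR : bctype) (k : bctype) (j : nat) : bool :=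
  negb per && ((Nat.eqb j 0 && bc_eqb bcL k) || (Nat.eqb j J && bc_eqb bcR k)).

Definition in_Vh (J : nat) (per : bool) (f : nat -> R2) : Prop :=
  per = true -> f J = f 0%nat.

Definition in_V0 (J : nat) (per : bool) (bcL bcR : bctype) (f : nat -> R2) : Prop :=
  in_Vh J per f /\
  forall j, (j <= J)%nat -> in_bd J per bcL bcR B0 j = true -> fst (f j) = 0.

Definition in_Vd (J : nat) (per : bool) (bcL bcR : bctype) (f : nat -> R2) : Prop :=
  in_V0 J per bcL bcR f /\
  forall j, (j <= J)%nat ->
    (in_bd J per bcL bcR B1 j = true -> fst (f j) = 0) /\
    (in_bd J per bcL bcR B2 j = true -> snd (f j) = 0) /\
    (in_bd J per bcL bcR BD j = true -> f j = vzero).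

Definition Xrho (J : nat) (X : nat -> R2) (j : nat) : R2 :=
  vscal (INR J) (vsub (X j) (X (j - 1)%nat)).
Definition absXrho (J : nat) (X : nat -> R2) (j : nat) : R := vnorm (Xrho J X j).
Definition nu (J : nat) (X : nat -> R2) (j : nat) : R2 :=
  vscal (- / absXrho J X j) (vperp (Xrho J X j)).

(** Mass-lumped product of piecewise continuous (scalar) integrand fg:
    (f,g)^h = h/2 sum_{j=1}^J [ (fg)(q_j^-) + (fg)(q_{j-1}^+) ],
    where fg_minus j = (fg)(q_j^-) and fg_plus j = (fg)(q_{j-1}^+). *)
Definition mass_lumped (J : nat) (fg_minus fg_plus : nat -> R) : R :=
  hmesh J / 2 * sumR J (fun j => fg_minus j + fg_plus j).

Definition ml_w (J : nat) (X : nat -> R2) (u v : nat -> R2) : R :=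
  mass_lumped J
    (fun j => vdot (u j) (v j) * absXrho J X j)
    (fun j => vdot (u (j - 1)%nat) (v (j - 1)%nat) * absXrho J X j).

(** Exact L^2 inner product (nu^m, phi |X^m_rho|) for phi in underline V^h:
    on element j the integrand is affine, so its integral is
    h * |X_rho|_j * nu_j . (phi(q_{j-1}) + phi(q_j))/2. *)
Definition l2_nu_phi (J : nat) (X : nat -> R2) (phi : nat -> R2) : R :=
  sumR J (fun j => hmesh J * absXrho J X j *
                   vdot (nu J X j) (vscal (/2) (vadd (phi (j - 1)%nat) (phi j)))).

(** Exact L^2 inner product (Y_rho, eta_rho |X_rho|^{-1}) (piecewise constant integrand) *)
Definition l2_stiff (J : nat) (X Y eta : nat -> R2) : R :=
  sumR J (fun j => hmesh J * (vdot (Xrho J Y j) (Xrho J eta j) / absXrho J X j)).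

Definition Kfrak (J : nat) (per : bool) (bcL bcR : bctype)
  (X omega kappa : nat -> R2) (j : nat) : R2 :=
  if in_bd J per bcL bcR B0 j then vopp (kappa j)
  else vscal (fst (omega j) / fst (X j) / vdot (omega j) (omega j)) (omega j).

(** boundary term sum_{i=1}^2 sum_{p in d_i I} rho^(p) eta(p).e_{3-i};
    p = 0 is node 0 (constant rho0), p = 1 is node J (constant rho1). *)
Definition bd_contrib (k : bctype) (r : R) (v : R2) : R :=
  match k with
  | B1 => r * snd v
  | B2 => r * fst v
  | _ => 0
  end.
Definition bdry_term (J : nat) (per : bool) (bcL bcR : bctype) (rho0 rho1 : R)
  (eta : nat -> R2) : R :=
  if per then 0 else bd_contrib bcL rho0 (eta 0%nat) + bd_contrib bcR rho1 (eta J).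

(** Assumption (A) on X^m: |X_rho| > 0 on every element, and X.e1 > 0 at every
    point of closure(I) \ d_0 I; the points of element j are
    (1-t) q_{j-1} + t q_j, t in [0,1], where X is (1-t) X(q_{j-1}) + t X(q_j). *)
Definition assumption_A (J : nat) (per : bool) (bcL bcR : bctype) (X : nat -> R2) : Prop :=
  (forall j, (1 <= j <= J)%nat -> absXrho J X j > 0) /\
  (forall j, (1 <= j <= J)%nat -> forall t, 0 <= t <= 1 ->
     ~ (t = 0 /\ in_bd J per bcL bcR B0 (j - 1)%nat = true) ->
     ~ (t = 1 /\ in_bd J per bcL bcR B0 j = true) ->
     fst (vadd (vscal (1 - t) (X (j - 1)%nat)) (vscal t (X j))) > 0).

Definition is_omega (J : nat) (per : bool) (X omega : nat -> R2) : Prop :=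
  in_Vh J per omega /\
  forall phi, in_Vh J per phi -> ml_w J X omega phi = l2_nu_phi J X phi.

Definition scheme_eqs (J : nat) (per : bool) (bcL bcR : bctype) (rho0 rho1 dt : R)
  (Xm omega dX kappa : nat -> R2) : Prop :=
  let Xn := fun j => vadd (Xm j) (dX j) in
  (forall chi, in_Vh J per chi ->
     ml_w J Xm (fun j => vscal (/ dt) (vsub (Xn j) (Xm j))) chi
     = ml_w J Xm (fun j => vsub (kappa j) (Kfrak J per bcL bcR Xm omega kappa j)) chi) /\
  (forall eta, in_Vd J per bcL bcR eta ->
     ml_w J Xm kappa eta + l2_stiff J Xm Xn eta
     = - bdry_term J per bcL bcR rho0 rho1 eta).

(* Main.v *)
From Stdlib Require Import Reals Lia Lra Arith Bool FunctionalExtensionality.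
Require Import Defs.
Module FD.
From mathcomp Require Import all_boot all_algebra.
From mathcomp Require Import Rstruct.
Import GRing.Theory.
Local Open Scope ring_scope.

Lemma fd_surj (M : nat) (L : (nat -> R) -> nat -> R) :
  (forall x x' k, (forall i, x i = x' i) -> L x k = L x' k) ->
  (forall x x' k, L (fun i => Rplus (x i) (x' i)) k = Rplus (L x k) (L x' k)) ->
  (forall a x k, L (fun i => Rmult a (x i)) k = Rmult a (L x k)) ->
  (forall x, (forall k, lt k M -> L x k = R0) -> forall i, lt i M -> x i = R0) ->
  forall y : nat -> R, exists x, forall k, lt k M -> L x k = y k.
Proof.
move=> Lext Ladd Lsc Linj y.
pose d (i : 'I_M) : nat -> R := fun n => if n == nat_of_ord i then 1 else 0.
have Lsum : forall (s : seq 'I_M) (c : 'I_M -> R) k,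
   L (fun n => \sum_(i <- s) c i * d i n) k = \sum_(i <- s) c i * L (d i) k.
  move=> s c k; elim: s => [|i s IH].
    rewrite big_nil.
    rewrite (Lext _ (fun n => Rmult 0 ((fun _ => 0) n))); last by move=> n; rewrite big_nil; symmetry; apply: mul0r.
    by rewrite Lsc; apply: mul0r.
  rewrite big_cons.
  rewrite (Lext _ (fun n => Rplus ((fun n => c i * d i n) n) ((fun n => \sum_(j <- s) c j * d j n) n))); last first.
    by move=> n; rewrite big_cons.
  rewrite Ladd IH.
  rewrite (Lext _ (fun n => Rmult (c i) (d i n))) // Lsc //.
pose f (v : 'rV[R]_M) : nat -> R := fun n => \sum_(i < M) v 0 i * d i n.
have fE : forall v (i : 'I_M), f v i = v 0 i.
  move=> v i; rewrite /f (bigD1 i) //= big1 ?addr0.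
    by rewrite /d eqxx mulr1.
  by move=> j /negbTE ji; rewrite /d (inj_eq val_inj) eq_sym ji mulr0.
pose A : 'M[R]_M := \matrix_(i, k) L (d i) k.
have LfE : forall v (k : 'I_M), L (f v) k = (v *m A) 0 k.
  move=> v k; rewrite /f Lsum mxE; apply: eq_bigr => i _; by rewrite mxE.
have inj : forall v : 'rV[R]_M, v *m A = 0 -> v = 0.
  move=> v H; apply/rowP => i; rewrite mxE -fE.
  apply: (Linj (f v)); last by apply/ltP.
  move=> k /ltP Hk; rewrite (LfE v (Ordinal Hk)) H mxE; reflexivity.
have rf : row_free A.
  rewrite -kermx_eq0; apply/eqP; apply/row_matrixP => i; rewrite row0; apply: inj.
  by rewrite -row_mul mulmx_ker row0.
have uA : A \in unitmx by rewrite -row_free_unit.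
exists (f (\row_k y k *m invmx A)) => k /ltP Hk.
by rewrite (LfE _ (Ordinal Hk)) mulmxKV // mxE.
Qed.
End FD.

Open Scope R_scope.

Fixpoint sumN (n : nat) (g : nat -> R) : R :=
  match n with O => 0 | S k => sumN k g + g k end.

Lemma sumR_ext n f g : (forall j, (1 <= j <= n)%nat -> f j = g j) -> sumR n f = sumR n g.
Proof. induction n; intros H; simpl; auto. rewrite IHn by (intros; apply H; lia). rewrite H by lia. reflexivity. Qed.
Lemma sumR_plus n f g : sumR n (fun j => f j + g j) = sumR n f + sumR n g.
Proof. induction n; simpl; [ring|rewrite IHn; ring]. Qed.
Lemma sumR_minus n f g : sumR n (fun j => f j - g j) = sumR n f - sumR n g.
Proof. induction n; simpl; [ring|rewrite IHn; ring]. Qed.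
Lemma sumR_scal n c f : c * sumR n f = sumR n (fun j => c * f j).
Proof. induction n; simpl; [ring|rewrite <- IHn; ring]. Qed.
Lemma sumN_ext n f g : (forall i, (i < n)%nat -> f i = g i) -> sumN n f = sumN n g.
Proof. induction n; intros H; simpl; auto. rewrite IHn by (intros; apply H; lia). rewrite H by lia. reflexivity. Qed.
Lemma sumN_plus n f g : sumN n (fun j => f j + g j) = sumN n f + sumN n g.
Proof. induction n; simpl; [ring|rewrite IHn; ring]. Qed.
Lemma sumN_minus n f g : sumN n (fun j => f j - g j) = sumN n f - sumN n g.
Proof. induction n; simpl; [ring|rewrite IHn; ring]. Qed.
Lemma sumN_S_l n f : sumN (S n) f = f O + sumN n (fun i => f (S i)).
Proof. induction n; simpl in *; [ring|rewrite IHn; ring]. Qed.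
Lemma sumR_sumN n f : sumR n f = sumN n (fun i => f (S i)).
Proof. induction n; simpl; [ring|rewrite IHn; ring]. Qed.
Lemma sumN_zero n f : (forall i, (i < n)%nat -> f i = 0) -> sumN n f = 0.
Proof. induction n; intros H; simpl; auto. rewrite IHn by (intros; apply H; lia). rewrite H by lia. ring. Qed.
Lemma sumR_nonneg_zero n f : (forall j, (1 <= j <= n)%nat -> 0 <= f j) -> sumR n f = 0 ->
  forall j, (1 <= j <= n)%nat -> f j = 0.
Proof.
  induction n; intros H Hs j Hj; [lia|]. simpl in Hs.
  assert (Hp : 0 <= sumR n f).
  { clear IHn Hs Hj. induction n; simpl; [lra|].
    assert (0 <= f (S n)) by (apply H; lia). assert (0 <= sumR n f) by (apply IHn; intros; apply H; lia). lra. }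
  assert (Hl : 0 <= f (S n)) by (apply H; lia).
  destruct (Nat.eq_dec j (S n)) as [->|Hne]; [lra|].
  apply IHn; [intros; apply H; lia | lra | lia].
Qed.

Lemma R2eq (a b : R2) : fst a = fst b -> snd a = snd b -> a = b.
Proof. destruct a, b; simpl; intros; subst; reflexivity. Qed.
Lemma vdot_vadd a b c : vdot a (vadd b c) = vdot a b + vdot a c.
Proof. unfold vdot, vadd; simpl; ring. Qed.
Lemma vdot_vsub a b c : vdot a (vsub b c) = vdot a b - vdot a c.
Proof. unfold vdot, vsub; simpl; ring. Qed.
Lemma vdot_zero a : vdot a vzero = 0.
Proof. unfold vdot, vzero; simpl; ring. Qed.

Lemma decomp n (eta A B : nat -> R2) :
  sumR n (fun j => vdot (eta j) (A j) + vdot (eta (j - 1)%nat) (B j)) =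
  sumN (S n) (fun i => vdot (eta i) (vadd (if Nat.eqb i 0 then vzero else A i)
                                          (if Nat.eqb i n then vzero else B (S i)))).
Proof.
  rewrite sumR_plus.
  rewrite (sumN_ext _ _ (fun i => vdot (eta i) (if Nat.eqb i 0 then vzero else A i) +
                                vdot (eta i) (if Nat.eqb i n then vzero else B (S i))))
    by (intros; apply vdot_vadd).
  rewrite sumN_plus. f_equal.
  - rewrite sumN_S_l, sumR_sumN. simpl. rewrite vdot_zero. ring.
  - simpl. rewrite Nat.eqb_refl, vdot_zero, Rplus_0_r, sumR_sumN.
    apply sumN_ext. intros i Hi. replace (Nat.eqb i n) with false by (symmetry; apply Nat.eqb_neq; lia).
    simpl. rewrite Nat.sub_0_r. reflexivity.
Qed.

Open Scope bool_scope.
Open Scope R_scope.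

Section Prob.
Variables (J : nat) (per : bool) (bcL bcR : bctype) (rho0 rho1 : R) (Xm omega : nat -> R2) (dt : R).

Definition bd k j := in_bd J per bcL bcR k j.
Definition ww j := absXrho J Xm j.
Definition hh := hmesh J.
Definition cst j : R2 := vscal (fst (omega j) / fst (Xm j) / vdot (omega j) (omega j)) (omega j).
Definition kap (u : nat -> R2) j : R2 :=
  if bd B0 j then vscal (/ (2 * dt)) (u j) else vadd (vscal (/ dt) (u j)) (cst j).
Definition Yof (u : nat -> R2) j := vadd (Xm j) (u j).
Definition Ael u j := vadd (vscal (hh / 2 * ww j) (kap u j)) (vscal (hh * INR J / ww j) (Xrho J (Yof u) j)).
Definition Bel u j := vsub (vscal (hh / 2 * ww j) (kap u (j - 1)%nat)) (vscal (hh * INR J / ww j) (Xrho J (Yof u) j)).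
Definition bdvec (k : bctype) (r : R) : R2 :=
  match k with B1 => (0, r) | B2 => (r, 0) | _ => vzero end.
Definition bdv i : R2 :=
  if per then vzero else
  vadd (if Nat.eqb i 0 then bdvec bcL rho0 else vzero) (if Nat.eqb i J then bdvec bcR rho1 else vzero).
Definition Nd u i : R2 :=
  vadd (vadd (if Nat.eqb i 0 then vzero else Ael u i) (if Nat.eqb i J then vzero else Bel u (S i))) (bdv i).
Definition TT u eta := ml_w J Xm (kap u) eta + l2_stiff J Xm (Yof u) eta + bdry_term J per bcL bcR rho0 rho1 eta.

Lemma TT_el u eta : TT u eta =
  sumR J (fun j => vdot (eta j) (Ael u j) + vdot (eta (j - 1)%nat) (Bel u j)) + bdry_term J per bcL bcR rho0 rho1 eta.
Proof.
  unfold TT, ml_w, mass_lumped, l2_stiff. rewrite sumR_scal, <- sumR_plus. f_equal.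
  apply sumR_ext; intros j Hj. unfold Ael, Bel, vdot, vadd, vsub, vscal, Xrho, hh, ww. unfold vdot, vadd, vsub, vscal. cbn [fst snd].
  unfold Rdiv; ring.
Qed.

Lemma bdry_N (eta : nat -> R2) : (2 <= J)%nat ->
  bdry_term J per bcL bcR rho0 rho1 eta = sumN (S J) (fun i => vdot (eta i) (bdv i)).
Proof.
  intros HJ. destruct J as [|J'] eqn:EJ; [lia|].
  rewrite sumN_S_l. simpl sumN. 
  rewrite sumN_zero.
  2:{ intros i Hi. unfold bdv. destruct per; [apply vdot_zero|].
      replace (Nat.eqb (S i) 0) with false by reflexivity.
      replace (Nat.eqb (S i) J) with false by (symmetry; apply Nat.eqb_neq; lia).
      unfold vdot, vadd, vzero; simpl; ring. }
  unfold bdry_term, bdv. destruct per; [rewrite !vdot_zero; ring|].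
  rewrite EJ. simpl Nat.eqb. rewrite Nat.eqb_refl.
  replace (Nat.eqb 0 (S J')) with false by reflexivity.
  destruct bcL, bcR; unfold bd_contrib, bdvec, vdot, vadd, vzero; simpl; ring.
Qed.

Lemma TT_N u eta : (2 <= J)%nat -> TT u eta = sumN (S J) (fun i => vdot (eta i) (Nd u i)).
Proof.
  intros HJ. rewrite TT_el, decomp, (bdry_N _ HJ), <- sumN_plus.
  apply sumN_ext; intros i Hi. unfold Nd. symmetry; apply vdot_vadd.
Qed.


Definition cons i (c : bool) : bool :=
  if per then Nat.eqb i J else if c then (bd B2 i || bd BD i) else (bd B0 i || bd B1 i || bd BD i).
Definition sel (c : bool) (v : R2) : R := if c then snd v else fst v.
Definition Nmerge (N : nat -> R2) i : R2 := if per && Nat.eqb i 0 then vadd (N 0%nat) (N J) else N i.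
Definition consval (u : nat -> R2) i : R2 := if per then vsub (u J) (u 0%nat) else u i.
Definition Row u i c : R := if cons i c then sel c (consval u i) else sel c (Nmerge (Nd u) i).

Lemma sumN_first n f : (1 <= n)%nat -> sumN n f = f 0%nat + sumN (n - 1) (fun i => f (S i)).
Proof. intros H. destruct n; [lia|]. rewrite sumN_S_l. simpl. rewrite Nat.sub_0_r. reflexivity. Qed.

Lemma cons_eta eta i c : per = false -> in_Vd J per bcL bcR eta -> (i <= J)%nat -> cons i c = true -> sel c (eta i) = 0.
Proof.
  intros Ep [[_ H0] Hd] Hi. unfold cons, bd. rewrite Ep in *.
  destruct (Hd i Hi) as [H1 [H2 HD]].
  destruct c; unfold sel; intros H.
  - apply orb_prop in H as [H|H]; [apply H2; exact H| rewrite (HD H); reflexivity].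
  - apply orb_prop in H as [H|H]; [apply orb_prop in H as [H|H]|].
    + apply H0; auto.
    + apply H1; exact H.
    + rewrite (HD H); reflexivity.
Qed.

Lemma SL eta N : (1 <= J)%nat -> in_Vd J per bcL bcR eta ->
  (forall i c, (i <= J)%nat -> cons i c = false -> sel c (Nmerge N i) = 0) ->
  sumN (S J) (fun i => vdot (eta i) (N i)) = 0.
Proof.
  intros HJ Hv HN. assert (Hp : per = true \/ per = false) by (destruct per; auto). destruct Hp as [Ep|Ep].
  - destruct Hv as [[Hvh _] _]. assert (eJ : eta J = eta 0%nat) by (apply Hvh; exact Ep).
    simpl sumN. rewrite sumN_first by lia. rewrite sumN_zero.
    + rewrite eJ. assert (Hc : forall c, cons 0 c = false).
      { intros c; unfold cons; rewrite Ep; apply Nat.eqb_neq; lia. }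
      pose proof (HN 0%nat false ltac:(lia) (Hc false)) as Ha.
      pose proof (HN 0%nat true ltac:(lia) (Hc true)) as Hb.
      unfold Nmerge, sel in Ha, Hb. rewrite Ep in Ha, Hb. simpl in Ha, Hb.
      unfold vdot. unfold vadd in Ha, Hb. simpl in Ha, Hb. nra.
    + intros i Hi. assert (Hc : forall c, cons (S i) c = false).
      { intros c; unfold cons; rewrite Ep; apply Nat.eqb_neq; lia. }
      pose proof (HN (S i) false ltac:(lia) (Hc false)) as Ha.
      pose proof (HN (S i) true ltac:(lia) (Hc true)) as Hb.
      unfold Nmerge, sel in Ha, Hb. rewrite Ep in Ha, Hb. simpl in Ha, Hb.
      unfold vdot. rewrite Ha, Hb. ring.
  - apply sumN_zero. intros i Hi. unfold vdot.
    assert (A1 : fst (eta i) * fst (N i) = 0).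
    { destruct (cons i false) eqn:Ec.
      - pose proof (cons_eta eta i false Ep Hv ltac:(lia) Ec) as H. simpl in H. rewrite H; ring.
      - pose proof (HN i false ltac:(lia) Ec) as H. unfold Nmerge, sel in H. rewrite Ep in H. simpl in H. rewrite H; ring. }
    assert (A2 : snd (eta i) * snd (N i) = 0).
    { destruct (cons i true) eqn:Ec.
      - pose proof (cons_eta eta i true Ep Hv ltac:(lia) Ec) as H. simpl in H. rewrite H; ring.
      - pose proof (HN i true ltac:(lia) Ec) as H. unfold Nmerge, sel in H. rewrite Ep in H. simpl in H. rewrite H; ring. }
    lra.
Qed.

Lemma MR u : (forall i c, (i <= J)%nat -> cons i c = true -> sel c (consval u i) = 0) -> in_Vd J per bcL bcR u.
Proof.
  intros H. unfold cons, consval, bd in H. destruct per eqn:Ep.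
  - assert (HJ : forall c, sel c (vsub (u J) (u 0%nat)) = 0) by (intros c; apply (H J c); [lia| apply Nat.eqb_refl]).
    assert (Hf : forall k j, in_bd J per bcL bcR k j = true -> False) by (intros k j; unfold in_bd; rewrite Ep; simpl; discriminate).
    rewrite Ep in Hf.
    split; [split|].
    + intros _. pose proof (HJ false); pose proof (HJ true). unfold sel, vsub in *; simpl in *. apply R2eq; lra.
    + intros j _ Hb. exfalso; eapply Hf; eauto.
    + intros j _. repeat split; intros Hb; exfalso; eapply Hf; eauto.
  - split; [split|].
    + intros Hc; discriminate.
    + intros j Hj Hb. apply (H j false Hj). rewrite Hb. reflexivity.
    + intros j Hj. repeat split; intros Hb.
      * apply (H j false Hj). rewrite Hb, orb_true_r. reflexivity.
      * apply (H j true Hj). rewrite Hb. reflexivity.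
      * apply R2eq; [apply (H j false Hj)| apply (H j true Hj)]; rewrite Hb; rewrite ?orb_true_r; reflexivity.
Qed.

Definition zf : nat -> R2 := fun _ => vzero.
Definition sc j : R := if bd B0 j then / (2 * dt) else / dt.
Definition Eu u := sumR J (fun j => vdot (u j) (vsub (Ael u j) (Ael zf j)) + vdot (u (j - 1)%nat) (vsub (Bel u j) (Bel zf j))).

Lemma Eterm u j : vdot (u j) (vsub (Ael u j) (Ael zf j)) + vdot (u (j - 1)%nat) (vsub (Bel u j) (Bel zf j)) =
  hh / 2 * ww j * (sc j * vdot (u j) (u j) + sc (j - 1) * vdot (u (j - 1)%nat) (u (j - 1)%nat))
  + hh * INR J * INR J / ww j * vdot (vsub (u j) (u (j - 1)%nat)) (vsub (u j) (u (j - 1)%nat)).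
Proof.
  unfold Ael, Bel, kap, sc, zf, Yof, Xrho. destruct (bd B0 j), (bd B0 (j - 1)%nat);
  unfold vdot, vadd, vsub, vscal, vzero; cbn [fst snd]; unfold Rdiv; ring.
Qed.

Lemma vdot_self_nonneg v : 0 <= vdot v v.
Proof. unfold vdot; nra. Qed.
Lemma vdot_self_zero v : vdot v v = 0 -> v = vzero.
Proof. destruct v as [a b]; unfold vdot, vzero; simpl; intros H. apply R2eq; simpl; nra. Qed.

Lemma coerc u : (1 <= J)%nat -> dt > 0 -> (forall j, (1 <= j <= J)%nat -> ww j > 0) ->
  Eu u = 0 -> forall j, (j <= J)%nat -> u j = vzero.
Proof.
  intros HJ Hdt Hw HE.
  assert (hpos : hh > 0) by (unfold hh, hmesh; apply Rinv_0_lt_compat; apply lt_0_INR; lia).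
  assert (scpos : forall j, sc j > 0) by (intros j; unfold sc; destruct (bd B0 j); apply Rinv_0_lt_compat; lra).
  unfold Eu in HE. rewrite (sumR_ext _ _ _ (fun j _ => Eterm u j)) in HE.
  assert (key : forall j, (1 <= j <= J)%nat -> vdot (u j) (u j) = 0 /\ vdot (u (j - 1)%nat) (u (j - 1)%nat) = 0).
  { intros j Hj.
    assert (Hnn : forall j, (1 <= j <= J)%nat ->
      0 <= hh / 2 * ww j * (sc j * vdot (u j) (u j) + sc (j - 1) * vdot (u (j - 1)%nat) (u (j - 1)%nat))
      + hh * INR J * INR J / ww j * vdot (vsub (u j) (u (j - 1)%nat)) (vsub (u j) (u (j - 1)%nat))).
    { intros k Hk. pose proof (Hw k Hk). pose proof (scpos k). pose proof (scpos (k-1)%nat).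
      pose proof (vdot_self_nonneg (u k)). pose proof (vdot_self_nonneg (u (k-1)%nat)).
      pose proof (vdot_self_nonneg (vsub (u k) (u (k-1)%nat))).
      apply Rplus_le_le_0_compat.
      - apply Rmult_le_pos; [|nra]. nra.
      - apply Rmult_le_pos; [|lra]. unfold Rdiv. apply Rmult_le_pos; [|left; apply Rinv_0_lt_compat; lra].
        pose proof (pos_INR J). nra. }
    pose proof (sumR_nonneg_zero _ _ Hnn HE j Hj) as H0. cbv beta in H0.
    pose proof (Hnn j Hj) as _.
    pose proof (Hw j Hj). pose proof (scpos j). pose proof (scpos (j-1)%nat).
    pose proof (vdot_self_nonneg (u j)). pose proof (vdot_self_nonneg (u (j-1)%nat)).
    pose proof (vdot_self_nonneg (vsub (u j) (u (j-1)%nat))).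
    set (P3 := hh * INR J * INR J / ww j * vdot (vsub (u j) (u (j - 1)%nat)) (vsub (u j) (u (j - 1)%nat))) in H0.
    assert (P3 >= 0).
    { unfold P3. apply Rle_ge. apply Rmult_le_pos; [|lra]. unfold Rdiv. apply Rmult_le_pos; [|left; apply Rinv_0_lt_compat; lra].
      pose proof (pos_INR J). nra. }
    set (a := hh / 2 * ww j) in H0. assert (a > 0) by (unfold a; nra).
    set (S1 := sc j * vdot (u j) (u j)) in H0. set (S2 := sc (j - 1) * vdot (u (j - 1)%nat) (u (j - 1)%nat)) in H0.
    assert (S1 >= 0) by (unfold S1; nra). assert (S2 >= 0) by (unfold S2; nra).
    assert (0 <= a * (S1 + S2)) by (apply Rmult_le_pos; lra).
    assert (Ha : a * (S1 + S2) = 0) by lra.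
    assert (Hs : S1 + S2 = 0) by (destruct (Rmult_integral _ _ Ha); [lra|auto]).
    assert (Hs1 : S1 = 0) by lra. assert (Hs2 : S2 = 0) by lra.
    unfold S1, S2 in *. split.
    - destruct (Rmult_integral _ _ Hs1); [pose proof (scpos j); lra|auto].
    - destruct (Rmult_integral _ _ Hs2); [pose proof (scpos (j-1)%nat); lra|auto]. }
  intros j Hj. destruct j as [|j].
  - apply vdot_self_zero. apply (proj2 (key 1%nat ltac:(lia))).
  - apply vdot_self_zero. apply (proj1 (key (S j) ltac:(lia))).
Qed.

Ltac crunch := unfold sel in *; repeat match goal with |- context [if ?b then _ else _] => destruct b end;
  unfold vadd, vsub, vscal, vzero, vdot, sel, vopp in *; cbn [fst snd] in *; unfold Rdiv; try ring.




Lemma Ael_lin u j : vsub (Ael u j) (Ael zf j) =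
  vadd (vscal (hh / 2 * ww j * sc j) (u j)) (vscal (hh * INR J / ww j * INR J) (vsub (u j) (u (j - 1)%nat))).
Proof. unfold Ael, kap, sc, Yof, Xrho, zf. destruct (bd B0 j); apply R2eq; unfold vadd, vsub, vscal, vzero; cbn [fst snd]; unfold Rdiv; ring. Qed.
Lemma Bel_lin u j : vsub (Bel u j) (Bel zf j) =
  vsub (vscal (hh / 2 * ww j * sc (j - 1)%nat) (u (j - 1)%nat)) (vscal (hh * INR J / ww j * INR J) (vsub (u j) (u (j - 1)%nat))).
Proof. unfold Bel, kap, sc, Yof, Xrho, zf. destruct (bd B0 (j - 1)%nat); apply R2eq; unfold vadd, vsub, vscal, vzero; cbn [fst snd]; unfold Rdiv; ring. Qed.
Lemma Nd_lin u i : vsub (Nd u i) (Nd zf i) =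
  vadd (if Nat.eqb i 0 then vzero else vsub (Ael u i) (Ael zf i)) (if Nat.eqb i J then vzero else vsub (Bel u (S i)) (Bel zf (S i))).
Proof. unfold Nd. destruct (Nat.eqb i 0), (Nat.eqb i J); apply R2eq; unfold vadd, vsub, vzero; cbn [fst snd]; ring. Qed.

Lemma fstsnd_eq (a b : R2) : a = b -> fst a = fst b /\ snd a = snd b.
Proof. intros ->; auto. Qed.

Lemma Nd_aff u1 u2 e i : (forall j, e j = vsub (u1 j) (u2 j)) ->
  vsub (Nd e i) (Nd zf i) = vsub (Nd u1 i) (Nd u2 i).
Proof.
  intros H.
  assert (E : vsub (Nd u1 i) (Nd u2 i) = vsub (vsub (Nd u1 i) (Nd zf i)) (vsub (Nd u2 i) (Nd zf i)))
    by (apply R2eq; unfold vsub; cbn [fst snd]; ring).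
  rewrite E, !Nd_lin. destruct (Nat.eqb i 0), (Nat.eqb i J); rewrite ?Ael_lin, ?Bel_lin, ?H;
  apply R2eq; unfold vadd, vsub, vscal, vzero; cbn [fst snd]; rewrite ?H; unfold vsub; cbn [fst snd]; ring.
Qed.

Lemma Nd_add u1 u2 u3 i : (forall j, u3 j = vadd (u1 j) (u2 j)) ->
  vsub (Nd u3 i) (Nd zf i) = vadd (vsub (Nd u1 i) (Nd zf i)) (vsub (Nd u2 i) (Nd zf i)).
Proof.
  intros H. rewrite !Nd_lin. destruct (Nat.eqb i 0), (Nat.eqb i J); rewrite ?Ael_lin, ?Bel_lin;
  apply R2eq; unfold vadd, vsub, vscal, vzero; cbn [fst snd]; rewrite ?H; unfold vadd; cbn [fst snd]; ring.
Qed.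

Lemma Nd_scal a u1 u3 i : (forall j, u3 j = vscal a (u1 j)) ->
  vsub (Nd u3 i) (Nd zf i) = vscal a (vsub (Nd u1 i) (Nd zf i)).
Proof.
  intros H. rewrite !Nd_lin. destruct (Nat.eqb i 0), (Nat.eqb i J); rewrite ?Ael_lin, ?Bel_lin;
  apply R2eq; unfold vadd, vsub, vscal, vzero; cbn [fst snd]; rewrite ?H; unfold vscal; cbn [fst snd]; ring.
Qed.

Lemma Row_add u1 u2 u3 i c : (forall j, u3 j = vadd (u1 j) (u2 j)) ->
  Row u3 i c + Row zf i c = Row u1 i c + Row u2 i c.
Proof.
  intros H. pose proof (fun k => fstsnd_eq _ _ (Nd_add u1 u2 u3 k H)) as HN.
  unfold Row, consval, Nmerge. destruct (cons i c); [|destruct (per && Nat.eqb i 0)].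
  - unfold zf; destruct per; rewrite ?H; destruct c; unfold sel, vsub, vadd, vzero; cbn [fst snd]; ring.
  - destruct (HN 0%nat) as [A1 A2]. destruct (HN J) as [B1 B2].
    unfold vsub, vadd in *; cbn [fst snd] in *. destruct c; unfold sel; cbn [fst snd]; lra.
  - destruct (HN i) as [A1 A2]. unfold vsub, vadd in *; cbn [fst snd] in *. destruct c; unfold sel; lra.
Qed.

Lemma Row_scal a u1 u3 i c : (forall j, u3 j = vscal a (u1 j)) ->
  Row u3 i c - Row zf i c = a * (Row u1 i c - Row zf i c).
Proof.
  intros H. pose proof (fun k => fstsnd_eq _ _ (Nd_scal a u1 u3 k H)) as HN.
  unfold Row, consval, Nmerge. destruct (cons i c); [|destruct (per && Nat.eqb i 0)].
  - unfold zf; destruct per; rewrite ?H; destruct c; unfold sel, vsub, vscal, vzero; cbn [fst snd]; ring.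
  - destruct (HN 0%nat) as [A1 A2]. destruct (HN J) as [B1 B2].
    unfold vsub, vadd, vscal in *; cbn [fst snd] in *. destruct c; unfold sel; cbn [fst snd].
    + rewrite <- (Rplus_0_r (snd (Nd u3 0%nat) + snd (Nd u3 J))). nra.
    + nra.
  - destruct (HN i) as [A1 A2]. unfold vsub, vscal in *; cbn [fst snd] in *. destruct c; unfold sel; lra.
Qed.

Lemma EN u : Eu u = sumN (S J) (fun i => vdot (u i) (vsub (Nd u i) (Nd zf i))).
Proof.
  unfold Eu. rewrite decomp. apply sumN_ext; intros i Hi. f_equal.
  rewrite Nd_lin. reflexivity.
Qed.

Lemma sel_Nmerge_sub N1 N2 i c :
  sel c (Nmerge (fun j => vsub (N1 j) (N2 j)) i) = sel c (Nmerge N1 i) - sel c (Nmerge N2 i).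
Proof. unfold Nmerge. crunch. Qed.

Lemma ml_w_sub u v chi : ml_w J Xm (fun j => vsub (u j) (v j)) chi = ml_w J Xm u chi - ml_w J Xm v chi.
Proof.
  unfold ml_w, mass_lumped. rewrite <- Rmult_minus_distr_l, <- sumR_minus. f_equal.
  apply sumR_ext; intros j Hj. crunch.
Qed.

Lemma ml_w_ext u v chi : (forall j, (j <= J)%nat -> u j = v j) -> ml_w J Xm u chi = ml_w J Xm v chi.
Proof.
  intros H. unfold ml_w, mass_lumped. f_equal. apply sumR_ext; intros j Hj.
  rewrite (H j), (H (j-1)%nat) by lia. reflexivity.
Qed.

Lemma ml_pos D : (1 <= J)%nat -> (forall j, (1 <= j <= J)%nat -> ww j > 0) ->
  ml_w J Xm D D = 0 -> forall j, (j <= J)%nat -> D j = vzero.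
Proof.
  intros HJ Hw H.
  assert (hpos : hh > 0) by (unfold hh, hmesh; apply Rinv_0_lt_compat; apply lt_0_INR; lia).
  unfold ml_w, mass_lumped in H. fold hh in H.
  assert (Hs : sumR J (fun j => vdot (D j) (D j) * absXrho J Xm j + vdot (D (j - 1)%nat) (D (j - 1)%nat) * absXrho J Xm j) = 0).
  { apply Rmult_integral in H. destruct H as [H|H]; [lra|exact H]. }
  assert (Hnn : forall j, (1 <= j <= J)%nat -> 0 <= vdot (D j) (D j) * absXrho J Xm j + vdot (D (j - 1)%nat) (D (j - 1)%nat) * absXrho J Xm j).
  { intros j Hj. pose proof (Hw j Hj). unfold ww in *. pose proof (vdot_self_nonneg (D j)). pose proof (vdot_self_nonneg (D (j-1)%nat)). nra. }
  assert (key : forall j, (1 <= j <= J)%nat -> vdot (D j) (D j) = 0 /\ vdot (D (j - 1)%nat) (D (j - 1)%nat) = 0).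
  { intros j Hj. pose proof (sumR_nonneg_zero _ _ Hnn Hs j Hj) as H0. cbv beta in H0.
    pose proof (Hw j Hj). unfold ww in *. pose proof (vdot_self_nonneg (D j)). pose proof (vdot_self_nonneg (D (j-1)%nat)).
    assert (0 <= vdot (D j) (D j) * absXrho J Xm j) by nra.
    assert (0 <= vdot (D (j-1)%nat) (D (j-1)%nat) * absXrho J Xm j) by nra.
    assert (E1 : vdot (D j) (D j) * absXrho J Xm j = 0) by lra.
    assert (E2 : vdot (D (j-1)%nat) (D (j-1)%nat) * absXrho J Xm j = 0) by lra.
    apply Rmult_integral in E1. apply Rmult_integral in E2. split; [destruct E1|destruct E2]; auto; lra. }
  intros j Hj. destruct j as [|j].
  - apply vdot_self_zero. apply (proj2 (key 1%nat ltac:(lia))).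
  - apply vdot_self_zero. apply (proj1 (key (S j) ltac:(lia))).
Qed.

Lemma Vd_sub u v : in_Vd J per bcL bcR u -> in_Vd J per bcL bcR v -> in_Vd J per bcL bcR (fun j => vsub (u j) (v j)).
Proof.
  intros [[Hu1 Hu2] Hu3] [[Hv1 Hv2] Hv3]. split; [split|].
  - intros Hp. rewrite (Hu1 Hp), (Hv1 Hp). reflexivity.
  - intros j Hj Hb. unfold vsub; simpl. rewrite (Hu2 j Hj Hb), (Hv2 j Hj Hb). ring.
  - intros j Hj. destruct (Hu3 j Hj) as [A1 [A2 A3]]. destruct (Hv3 j Hj) as [B1 [B2 B3]].
    repeat split; intros Hb.
    + unfold vsub; simpl. rewrite (A1 Hb), (B1 Hb). ring.
    + unfold vsub; simpl. rewrite (A2 Hb), (B2 Hb). ring.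
    + rewrite (A3 Hb), (B3 Hb). unfold vsub, vzero; simpl. apply R2eq; simpl; ring.
Qed.

Lemma Row_cons u i c : cons i c = true -> Row u i c = sel c (consval u i).
Proof. intros H; unfold Row; rewrite H; reflexivity. Qed.
Lemma Row_free u i c : cons i c = false -> Row u i c = sel c (Nmerge (Nd u) i).
Proof. intros H; unfold Row; rewrite H; reflexivity. Qed.
Lemma consval_zf i c : sel c (consval zf i) = 0.
Proof. unfold consval, zf, sel, vsub, vzero; destruct per, c; cbn [fst snd]; ring. Qed.

Lemma main_sec : (3 <= J)%nat -> in_V0 J per bcL bcR Xm -> assumption_A J per bcL bcR Xm ->
  is_omega J per Xm omega -> dt > 0 ->
  exists dX kappa : nat -> R2,
    in_Vd J per bcL bcR dX /\ in_Vh J per kappa /\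
    scheme_eqs J per bcL bcR rho0 rho1 dt Xm omega dX kappa /\
    (forall dX' kappa' : nat -> R2,
       in_Vd J per bcL bcR dX' -> in_Vh J per kappa' ->
       scheme_eqs J per bcL bcR rho0 rho1 dt Xm omega dX' kappa' ->
       forall j, (j <= J)%nat -> dX' j = dX j /\ kappa' j = kappa j).
Proof.
  intros HJ HX HA Hom Hdt.
  destruct HX as [HXh _]. destruct Hom as [Homh _].
  assert (Hw : forall j, (1 <= j <= J)%nat -> ww j > 0) by (intros; apply (proj1 HA); auto).
  assert (UQ : forall u, sumN (S J) (fun i => vdot (u i) (vsub (Nd u i) (Nd zf i))) = 0 -> forall j, (j <= J)%nat -> u j = vzero).
  { intros u Hu. apply coerc; auto; try lia. rewrite EN. exact Hu. }
  set (M := (2 * S J)%nat).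
  set (uof := fun (x : nat -> R) (j : nat) => (x (2*j)%nat, x (2*j+1)%nat) : R2).
  set (L := fun (x : nat -> R) k => Row (uof x) (Nat.div2 k) (Nat.odd k) - Row zf (Nat.div2 k) (Nat.odd k)).
  assert (Hk : forall i (c : bool), (i <= J)%nat -> (2*i + Nat.b2n c < M)%nat /\ Nat.div2 (2*i + Nat.b2n c) = i /\ Nat.odd (2*i + Nat.b2n c) = c).
  { intros i c Hi. destruct c; simpl Nat.b2n; repeat split; try (unfold M; lia).
    - rewrite Nat.add_1_r, Nat.div2_succ_double; reflexivity.
    - rewrite Nat.add_1_r, Nat.odd_succ, Nat.even_even; reflexivity.
    - rewrite Nat.add_0_r, Nat.div2_double; reflexivity.
    - rewrite Nat.add_0_r, Nat.odd_even; reflexivity. }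
  destruct (FD.fd_surj M L) with (y := fun k => - Row zf (Nat.div2 k) (Nat.odd k)) as [x Hx].
  - intros x x' k Hxx. assert (x = x') by (extensionality i; auto). subst; reflexivity.
  - intros x x' k. unfold L.
    pose proof (Row_add (uof x) (uof x') (uof (fun i => x i + x' i)) (Nat.div2 k) (Nat.odd k) (fun j => eq_refl)) as E. lra.
  - intros a x k. unfold L.
    exact (Row_scal a (uof x) (uof (fun i => a * x i)) (Nat.div2 k) (Nat.odd k) (fun j => eq_refl)).
  - intros x Hx i Hi.
    assert (Hrow : forall i' c, (i' <= J)%nat -> Row (uof x) i' c = Row zf i' c).
    { intros i' c Hi'. destruct (Hk i' c Hi') as [H1 [H2 H3]]. pose proof (Hx _ H1) as E. unfold L in E. rewrite H2, H3 in E. lra. }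
    assert (Hv : in_Vd J per bcL bcR (uof x)).
    { apply MR. intros i' c Hi' Hc. rewrite <- (Row_cons _ _ _ Hc), (Hrow i' c Hi'), (Row_cons _ _ _ Hc). apply consval_zf. }
    assert (Hs : sumN (S J) (fun i => vdot (uof x i) (vsub (Nd (uof x) i) (Nd zf i))) = 0).
    { apply SL; [lia| exact Hv|]. intros i' c Hi' Hc. rewrite sel_Nmerge_sub.
      pose proof (Hrow i' c Hi') as E. rewrite !(Row_free _ _ _ Hc) in E. lra. }
    pose proof (UQ _ Hs) as Hz.
    pose proof (Nat.div2_odd i) as Hd. assert (Hj : (Nat.div2 i <= J)%nat) by (unfold M in Hi; destruct (Nat.odd i); simpl in Hd; lia).
    pose proof (Hz _ Hj) as Hzz. unfold uof, vzero in Hzz. injection Hzz as Ha Hb.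
    destruct (Nat.odd i); simpl Nat.b2n in Hd.
    + rewrite Hd. exact Hb.
    + rewrite Nat.add_0_r in Hd. rewrite Hd. exact Ha.
  - set (dX := uof x).
    assert (Hrow0 : forall i c, (i <= J)%nat -> Row dX i c = 0).
    { intros i c Hi. destruct (Hk i c Hi) as [H1 [H2 H3]]. pose proof (Hx _ H1) as E. unfold L in E. rewrite H2, H3 in E. unfold dX. lra. }
    assert (HdX : in_Vd J per bcL bcR dX).
    { apply MR. intros i c Hi Hc. rewrite <- (Row_cons _ _ _ Hc). apply Hrow0; auto. }
    assert (HT : forall eta, in_Vd J per bcL bcR eta -> TT dX eta = 0).
    { intros eta Heta. rewrite TT_N by lia. apply SL; auto; [lia|]. intros i c Hi Hc. rewrite <- (Row_free _ _ _ Hc). apply Hrow0; auto. }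
    assert (Hnod : forall u j, vscal (/ dt) (vsub (vadd (Xm j) (u j)) (Xm j)) = vsub (kap u j) (Kfrak J per bcL bcR Xm omega (kap u) j)).
    { intros u j. unfold Kfrak, kap, bd. fold (cst j). destruct (in_bd J per bcL bcR B0 j); apply R2eq;
      unfold vscal, vsub, vadd, vopp; cbn [fst snd]; field; apply Rgt_not_eq; exact Hdt. }
    exists dX, (kap dX).
    split; [exact HdX|]. split.
    { intros Hp. unfold kap, bd, in_bd. rewrite Hp. simpl. unfold cst.
      rewrite (HXh Hp), (Homh Hp), (proj1 (proj1 HdX) Hp). reflexivity. }
    split.
    { unfold scheme_eqs. cbv zeta. split.
      - intros chi _. apply ml_w_ext; intros j _. apply Hnod.
      - intros eta Heta. pose proof (HT eta Heta) as E. unfold TT, Yof in E. lra. }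
    intros dX' kap' HdX' Hkap' HS j Hj.
    destruct HS as [E1 E2].
    set (U := fun j => vscal (/ dt) (vsub (vadd (Xm j) (dX' j)) (Xm j))).
    set (V := fun j => vsub (kap' j) (Kfrak J per bcL bcR Xm omega kap' j)).
    set (D := fun j => vsub (U j) (V j)).
    assert (HDv : in_Vh J per D).
    { intros Hp. unfold D, U, V, Kfrak.
      replace (in_bd J per bcL bcR B0 J) with false by (unfold in_bd; rewrite Hp; reflexivity).
      replace (in_bd J per bcL bcR B0 0) with false by (unfold in_bd; rewrite Hp; reflexivity).
      rewrite (HXh Hp), (Homh Hp), (proj1 (proj1 HdX') Hp), (Hkap' Hp). reflexivity. }
    assert (HD0 : ml_w J Xm D D = 0).
    { assert (Es : ml_w J Xm D D = ml_w J Xm U D - ml_w J Xm V D) by apply ml_w_sub.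
      pose proof (E1 D HDv) as E. cbv beta in E. change (ml_w J Xm U D = ml_w J Xm V D) in E. lra. }
    pose proof (ml_pos D ltac:(lia) Hw HD0) as HDz.
    assert (Hk' : forall i, (i <= J)%nat -> kap' i = kap dX' i).
    { intros i Hi. pose proof (HDz i Hi) as Z. unfold D, U, V, Kfrak, kap, bd, cst in *.
      destruct (in_bd J per bcL bcR B0 i); apply fstsnd_eq in Z; destruct Z as [Z1 Z2];
      unfold vsub, vscal, vadd, vopp, vzero in *; cbn [fst snd] in *; apply R2eq; cbn [fst snd];
      rewrite ?Rinv_mult; lra. }
    assert (HT' : forall eta, in_Vd J per bcL bcR eta -> TT dX' eta = 0).
    { intros eta Heta. pose proof (E2 eta Heta) as E. cbv beta in E.
      rewrite (ml_w_ext kap' (kap dX') eta Hk') in E. unfold TT, Yof. lra. }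
    set (e := fun j => vsub (dX' j) (dX j)).
    assert (He : in_Vd J per bcL bcR e) by (apply Vd_sub; auto).
    assert (Hs : sumN (S J) (fun i => vdot (e i) (vsub (Nd e i) (Nd zf i))) = 0).
    { rewrite (sumN_ext _ _ (fun i => vdot (e i) (Nd dX' i) - vdot (e i) (Nd dX i))).
      - rewrite sumN_minus, <- !TT_N by lia. rewrite HT', HT by auto. ring.
      - intros i _. rewrite (Nd_aff dX' dX e i (fun j => eq_refl)). apply vdot_vsub. }
    pose proof (UQ e Hs j Hj) as Ze. unfold e, vsub, vzero in Ze. apply fstsnd_eq in Ze. cbn [fst snd] in Ze.
    assert (EdX : dX' j = dX j) by (apply R2eq; lra).
    split; [exact EdX|]. rewrite (Hk' j Hj). unfold kap. rewrite EdX. reflexivity.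
Qed.

End Prob.

Theorem lemma4p2 (J : nat) (per : bool) (bcL bcR : bctype) (rho0 rho1 : R)
  (Xm omega : nat -> R2) (dt : R) :
  (3 <= J)%nat ->
  Rabs rho0 <= 1 -> Rabs rho1 <= 1 ->
  in_V0 J per bcL bcR Xm ->
  assumption_A J per bcL bcR Xm ->
  is_omega J per Xm omega ->
  (forall j, (j <= J)%nat -> in_bd J per bcL bcR B0 j = false -> omega j <> vzero) ->
  dt > 0 ->
  exists dX kappa : nat -> R2,
    in_Vd J per bcL bcR dX /\ in_Vh J per kappa /\
    scheme_eqs J per bcL bcR rho0 rho1 dt Xm omega dX kappa /\
    (forall dX' kappa' : nat -> R2,
       in_Vd J per bcL bcR dX' -> in_Vh J per kappa' ->
       scheme_eqs J per bcL bcR rho0 rho1 dt Xm omega dX' kappa' ->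
       forall j, (j <= J)%nat -> dX' j = dX j /\ kappa' j = kappa j).
Proof.
  intros HJ _ _ HX HA Hom _ Hdt. apply main_sec; auto.
Qed.
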